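(* Let $Y=(Y_{ij})$ be a $3\times 3$ real symmetric positive definite Minkowski-reduced matrix. Put $$c_1=\min\bigl(Y_{11}-Y_{12}-|Y_{13}|,\ Y_{22}-Y_{21}-Y_{23},\ Y_{33}-Y_{32}-|Y_{31}|\bigr),\qquad c=\max\Bigl(c_1,\ \tfrac{1}{100}Y_{11}\Bigr).$$ Then for all $n\in\mathbb{R}^3$ we have ${}^t n\, Y\, n\ \ge\ c\,{}^t n\, n$.
   Context: A real symmetric positive definite $g\times g$ matrix $Y$ is Minkowski-reduced if (a) for all $j=1,\dots,g$ and all $v=(v_1,\dots,v_g)\in\mathbb{Z}^g$ with $\gcd(v_j,\dots,v_g)=1$ one has ${}^t v Y v\ge Y_{jj}$, and (b) for all $j=1,\dots,g-1$ one has $Y_{j,j+1}\ge 0$. *)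

(* Defs.v *)
From HB Require Import structures.
From mathcomp Require Import all_boot all_order all_algebra.
Set Implicit Arguments. Unset Strict Implicit. Unset Printing Implicit Defensive.
Import Order.TTheory GRing.Theory Num.Theory.
Local Open Scope ring_scope.

Definition qform (R : realFieldType) (g : nat) (Y : 'M[R]_g) (n : 'cV[R]_g) : R :=
  (n^T *m Y *m n) 0 0.

Definition is_symmetric_mx (R : realFieldType) (g : nat) (Y : 'M[R]_g) : Prop :=
  Y^T = Y.

Definition posdefmx (R : realFieldType) (g : nat) (Y : 'M[R]_g) : Prop :=
  forall n : 'cV[R]_g, n != 0 -> 0 < qform Y n.

(* gcd(v_j, ..., v_g) (0-based indices j..g-1) *)
Definition gcd_from (g : nat) (j : 'I_g) (v : 'cV[int]_g) : int :=
  \big[gcdz/0]_(k : 'I_g | (j <= k)%N) v k 0.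

Definition minkowski_reduced (R : realFieldType) (g : nat) (Y : 'M[R]_g) : Prop :=
  (forall (j : 'I_g) (v : 'cV[int]_g),
      gcd_from j v = 1 -> Y j j <= qform Y (map_mx (fun z : int => z%:~R) v))
  /\ (forall i j : 'I_g, nat_of_ord j = (nat_of_ord i).+1 -> 0 <= Y i j).

Definition i0 : 'I_3 := @Ordinal 3 0 isT.
Definition i1 : 'I_3 := @Ordinal 3 1 isT.
Definition i2 : 'I_3 := @Ordinal 3 2 isT.

(* Main.v *)
Require Import Defs.
From HB Require Import structures.
From mathcomp Require Import all_boot all_order all_algebra.
From mathcomp Require Import ring lra.
Import Order.TTheory GRing.Theory Num.Theory.
Local Open Scope ring_scope.
Set Implicit Arguments.

Lemma detbound (R : realFieldType) (a b c d e f : R) :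
 0 < a -> a <= b -> b <= c -> 0 <= d -> 0 <= f -> 2*d <= a -> 2*e <= a -> -(2*e) <= a -> 2*f <= b ->
 0 <= a+b-2*d+2*e-2*f ->
 a*b*c/4%:R <= a*b*c + 2*d*e*f - a*f^+2 - b*e^+2 - c*d^+2.
Proof.
move=> Ha Hab Hbc Hd Hf Hd2 He1 He2 Hf2 Ht.
have Hb : 0 < b by lra. have Hc : 0 < c by lra.
case: (lerP 0 e) => He.
- have p1 : 0 <= f*(b-2*f) by apply: mulr_ge0; lra.
  have p2 : 0 <= b*(b-2*f) by apply: mulr_ge0; lra.
  have p3 : 0 <= b*(c-b) by apply: mulr_ge0; lra.
  have X1 : 0 <= b*c - 4%:R*f^+2 by lra.
  have p4 : 0 <= e*(a-2*e) by apply: mulr_ge0; lra.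
  have p5 : 0 <= a*(a-2*e) by apply: mulr_ge0; lra.
  have p6 : 0 <= a*(c-a) by apply: mulr_ge0; lra.
  have X2 : 0 <= a*c - 4%:R*e^+2 by lra.
  have p7 : 0 <= d*(a-2*d) by apply: mulr_ge0; lra.
  have p8 : 0 <= a*(a-2*d) by apply: mulr_ge0; lra.
  have p9 : 0 <= a*(b-a) by apply: mulr_ge0; lra.
  have X3 : 0 <= a*b - 4%:R*d^+2 by lra.
  have q1 : 0 <= a*(b*c - 4%:R*f^+2) by apply: mulr_ge0; lra.
  have q2 : 0 <= b*(a*c - 4%:R*e^+2) by apply: mulr_ge0; lra.
  have q3 : 0 <= c*(a*b - 4%:R*d^+2) by apply: mulr_ge0; lra.
  have q4 : 0 <= d*e*f by apply: mulr_ge0; [apply: mulr_ge0|]; lra.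
  have q5 : 0 <= a*b*c by apply: mulr_ge0; [apply: mulr_ge0|]; lra.
  lra.
- have p1 : 0 <= f*(b-2*f) by apply: mulr_ge0; lra.
  have p2 : 0 <= f*(c-b) by apply: mulr_ge0; lra.
  have r1 : 0 <= a*(c*f - 2*f^+2) by apply: mulr_ge0; lra.
  have p3 : 0 <= (-e)*(a+2*e) by apply: mulr_ge0; lra.
  have r2 : 0 <= b*(-(a*e) - 2*e^+2) by apply: mulr_ge0; lra.
  have r2' : 0 <= a*(-e)*(c-b) by apply: mulr_ge0; [apply: mulr_ge0|]; lra.
  have p4 : 0 <= d*(a-2*d) by apply: mulr_ge0; lra.
  have r3 : 0 <= c*(a*d - 2*d^+2) by apply: mulr_ge0; lra.
  have r4 : 0 <= a*c*(a+b-2*d+2*e-2*f) by apply: mulr_ge0; [apply: mulr_ge0|]; lra.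
  have r5 : 0 <= a*c*(b-a) by apply: mulr_ge0; [apply: mulr_ge0|]; lra.
  have r6 : 0 <= (a-2*d)*(-e)*f by apply: mulr_ge0; [apply: mulr_ge0|]; lra.
  have r7 : 0 <= a*(a+2*e)*f by apply: mulr_ge0; [apply: mulr_ge0|]; lra.
  have r8 : 0 <= a*a*(b-2*f) by apply: mulr_ge0; [apply: mulr_ge0|]; lra.
  have r9 : 0 <= a*b*(c-a) by apply: mulr_ge0; [apply: mulr_ge0|]; lra.
  lra.
Qed.

Lemma key2 (R : realFieldType) (a b c d e f x y z : R) :
 0 < a -> a <= b -> b <= c -> 0 <= d -> 0 <= f -> 2*d <= a -> 2*e <= a -> -(2*e) <= a -> 2*f <= b ->
 0 <= a+b-2*d+2*e-2*f ->
 a/100%:R * (x^+2 + y^+2 + z^+2) <=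
   a*x^+2 + b*y^+2 + c*z^+2 + 2*d*x*y + 2*e*x*z + 2*f*y*z.
Proof.
move=> Ha Hab Hbc Hd Hf Hd2 He1 He2 Hf2 Ht.
have Hdet := @detbound _ a b c d e f Ha Hab Hbc Hd Hf Hd2 He1 He2 Hf2 Ht.
set k := a/100%:R.
have Hk : k = a/100%:R by [].
set A := a - k. set B := b - k. set C := c - k.
set m2 := A*B - d^+2.
set dZ := A*B*C + 2*d*e*f - A*f^+2 - B*e^+2 - C*d^+2.
have Hid : A* m2*(a*x^+2 + b*y^+2 + c*z^+2 + 2*d*x*y + 2*e*x*z + 2*f*y*z - k * (x^+2 + y^+2 + z^+2))
   = m2*(A*x + d*y + e*z)^+2 + (m2*y + (A*f - d*e)*z)^+2 + A*dZ*z^+2.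
  rewrite /m2 /dZ /A /B /C; ring.
have HdZ : dZ = (a*b*c + 2*d*e*f - a*f^+2 - b*e^+2 - c*d^+2)
   - k*(a*b - d^+2 + a*c - e^+2 + b*c - f^+2) + k^+2*(a+b+c) - k^+3.
  rewrite /dZ /A /B /C; ring.
have Hb : 0 < b by lra. have Hc : 0 < c by lra.
have p1 : 0 <= b*(c-a) by apply: mulr_ge0; lra.
have p2 : 0 <= c*(b-a) by apply: mulr_ge0; lra.
have q1 : 0 <= a*(b-a) by apply: mulr_ge0; lra.
have p3 : 0 <= a*(b*c - a*a) by apply: mulr_ge0; lra.
have p4 : 0 <= a*(3%:R*b*c - (a*b - d^+2 + a*c - e^+2 + b*c - f^+2)).
  apply: mulr_ge0; first lra.
  have := sqr_ge0 d; have := sqr_ge0 e; have := sqr_ge0 f. lra.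
have p5 : 0 <= k^+2*(a+b+c) by apply: mulr_ge0; [apply: sqr_ge0 | lra].
have p6 : 0 <= a*b*c by apply: mulr_ge0; [apply: mulr_ge0|]; lra.
have p7 : k^+3 = a*a*a/1000000%:R by rewrite Hk; field.
have p8 : k*(a*b - d^+2 + a*c - e^+2 + b*c - f^+2) <= 3%:R*(a*b*c)/100%:R by rewrite Hk; lra.
have HdZ0 : 0 <= dZ by rewrite HdZ p7; lra.
have q2 : 0 <= d*(a-2*d) by apply: mulr_ge0; lra.
have q3 : 0 <= a*(a-2*d) by apply: mulr_ge0; lra.
have q4 : 0 < a*b by apply: mulr_gt0.
have Hm2 : 0 < m2 by rewrite /m2 /A /B Hk; lra.
have HA : 0 < A by rewrite /A Hk; lra.
have HR : 0 <= m2*(A*x + d*y + e*z)^+2 + (m2*y + (A*f - d*e)*z)^+2 + A*dZ*z^+2.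
  apply: addr_ge0; [apply: addr_ge0|].
  - by apply: mulr_ge0; [lra | apply: sqr_ge0].
  - by apply: sqr_ge0.
  - by apply: mulr_ge0; [apply: mulr_ge0; lra | apply: sqr_ge0].
rewrite -Hid in HR.
rewrite pmulr_rge0 in HR; last by apply: mulr_gt0.
lra.
Qed.

Lemma key1 (R : realFieldType) (a b c d e f x y z m : R) :
 0 <= d -> 0 <= f -> m <= a - d - `|e| -> m <= b - d - f -> m <= c - f - `|e| ->
 m * (x^+2 + y^+2 + z^+2) <=
   a*x^+2 + b*y^+2 + c*z^+2 + 2*d*x*y + 2*e*x*z + 2*f*y*z.
Proof.
move=> Hd Hf H1 H2 H3.
have s1 : 0 <= d*(x+y)^+2 by apply: mulr_ge0 => //; apply: sqr_ge0.
have s3 : 0 <= f*(y+z)^+2 by apply: mulr_ge0 => //; apply: sqr_ge0.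
have t1 : m*x^+2 <= (a - d - `|e|)*x^+2 by apply: ler_wpM2r => //; apply: sqr_ge0.
have t2 : m*y^+2 <= (b - d - f)*y^+2 by apply: ler_wpM2r => //; apply: sqr_ge0.
have t3 : m*z^+2 <= (c - f - `|e|)*z^+2 by apply: ler_wpM2r => //; apply: sqr_ge0.
case: (lerP 0 e) => He.
- rewrite ger0_norm // in t1 t3.
  have s2 : 0 <= e*(x+z)^+2 by apply: mulr_ge0 => //; apply: sqr_ge0.
  lra.
- rewrite ltr0_norm // in t1 t3.
  have s2 : 0 <= (-e)*(x-z)^+2 by apply: mulr_ge0; [lra | apply: sqr_ge0].
  lra.
Qed.
Lemma qform3 (R : realFieldType) (Y : 'M[R]_3) n : qform Y n =
  \sum_(i < 3) \sum_(j < 3) n i 0 * Y i j * n j 0.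
Proof.
rewrite /qform !mxE exchange_big; apply: eq_bigr => j _; rewrite !mxE big_distrl; apply: eq_bigr => i _.
by rewrite !mxE.
Qed.
Lemma qform3e (R : realFieldType) (Y : 'M[R]_3) n : qform Y n =
  n i0 0 * Y i0 i0 * n i0 0 + n i0 0 * Y i0 i1 * n i1 0 + n i0 0 * Y i0 i2 * n i2 0 +
  (n i1 0 * Y i1 i0 * n i0 0 + n i1 0 * Y i1 i1 * n i1 0 + n i1 0 * Y i1 i2 * n i2 0) +
  (n i2 0 * Y i2 i0 * n i0 0 + n i2 0 * Y i2 i1 * n i1 0 + n i2 0 * Y i2 i2 * n i2 0).
Proof.
rewrite qform3 !big_ord_recr !big_ord0 /= !add0r.
have -> : (widen_ord (leqnSn 2) (widen_ord (leqnSn 1) (ord_max : 'I_1)) : 'I_3) = i0 by apply/val_inj.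
have -> : (widen_ord (leqnSn 2) (ord_max : 'I_2) : 'I_3) = i1 by apply/val_inj.
have -> : (ord_max : 'I_3) = i2 by apply/val_inj.
by [].
Qed.
Definition v3 (x y z : int) : 'cV[int]_3 := \col_i (nth 0 [:: x; y; z] i).
Lemma g1 : gcd_from i1 (v3 (-1) 1 0) = 1.
Proof. rewrite /gcd_from. under eq_bigr => k _ do rewrite mxE. by rewrite -(big_mkord (fun k => (_ <= k)%N) (fun k => nth 0 _ k)) unlock. Qed.
Lemma g2 : gcd_from i2 (v3 1 (-1) 1) = 1.
Proof. rewrite /gcd_from. under eq_bigr => k _ do rewrite mxE. by rewrite -(big_mkord (fun k => (_ <= k)%N) (fun k => nth 0 _ k)) unlock. Qed.
Lemma g0 : gcd_from i0 (v3 0 1 0) = 1.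
Proof. rewrite /gcd_from. under eq_bigr => k _ do rewrite mxE. by rewrite -(big_mkord (fun k => (_ <= k)%N) (fun k => nth 0 _ k)) unlock. Qed.

Lemma qv (R : realFieldType) (Y : 'M[R]_3) x y z :
  qform Y (map_mx (fun t : int => t%:~R) (v3 x y z)) =
  x%:~R * Y i0 i0 * x%:~R + x%:~R * Y i0 i1 * y%:~R + x%:~R * Y i0 i2 * z%:~R +
  (y%:~R * Y i1 i0 * x%:~R + y%:~R * Y i1 i1 * y%:~R + y%:~R * Y i1 i2 * z%:~R) +
  (z%:~R * Y i2 i0 * x%:~R + z%:~R * Y i2 i1 * y%:~R + z%:~R * Y i2 i2 * z%:~R).
Proof. by rewrite qform3e !mxE. Qed.

Theorem lemma2p3 (R : realFieldType) (Y : 'M[R]_3) :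
  is_symmetric_mx Y -> posdefmx Y -> minkowski_reduced Y ->
  let c1 := Num.min (Num.min (Y i0 i0 - Y i0 i1 - `|Y i0 i2|)
                             (Y i1 i1 - Y i1 i0 - Y i1 i2))
                    (Y i2 i2 - Y i2 i1 - `|Y i2 i0|) in
  let c := Num.max c1 (Y i0 i0 / 100%:R) in
  forall n : 'cV[R]_3, c * qform 1%:M n <= qform Y n.
Proof.
move=> Hsym Hpd [Hmin Hpos] c1 c n.
have sym : forall i j, Y j i = Y i j by move=> i j; rewrite -{1}Hsym mxE.
have Ha : 0 < Y i0 i0.
  have H := Hpd (map_mx (fun t : int => t%:~R) (v3 1 0 0)).
  rewrite qv ?intrN ?mulr0z ?mulr1z in H.
  have nz : map_mx (fun t : int => t%:~R) (v3 1 0 0) != 0 :> 'cV[R]_3.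
    by apply/negP => /eqP/matrixP/(_ i0 0); rewrite !mxE /= mulr1z => /eqP; rewrite oner_eq0.
  by move: (H nz); lra.
have gc : forall j x y z, gcd_from j (v3 x y z) = \big[gcdz/0]_(0 <= k < 3 | (j <= k)%N) nth 0 [:: x; y; z] k.
  move=> j x y z; rewrite /gcd_from; under eq_bigr => k _ do rewrite mxE.
  by rewrite -(big_mkord (fun k => (_ <= k)%N) (fun k => nth 0 _ k)).
have F1 := Hmin i0 (v3 0 1 0) ltac:(by rewrite gc unlock).
have F2 := Hmin i1 (v3 0 0 1) ltac:(by rewrite gc unlock).
have F3 := Hmin i1 (v3 (-1) 1 0) ltac:(by rewrite gc unlock).
have F4 := Hmin i2 (v3 1 0 1) ltac:(by rewrite gc unlock).
have F5 := Hmin i2 (v3 (-1) 0 1) ltac:(by rewrite gc unlock).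
have F6 := Hmin i2 (v3 0 (-1) 1) ltac:(by rewrite gc unlock).
have F7 := Hmin i2 (v3 1 (-1) 1) ltac:(by rewrite gc unlock).
rewrite !qv ?intrN ?mulr0z ?mulr1z in F1 F2 F3 F4 F5 F6 F7.
have Hd := Hpos i0 i1 erefl.
have Hf := Hpos i1 i2 erefl.
rewrite qform3e [qform _ n]qform3e !mxE /=.
rewrite (sym i0 i1) (sym i0 i2) (sym i1 i2) in F1 F2 F3 F4 F5 F6 F7 *.
rewrite /c /c1 (sym i0 i1) (sym i1 i2) (sym i0 i2).
have h1 : Y i0 i0 <= Y i1 i1 by lra.
have h2 : Y i1 i1 <= Y i2 i2 by lra.
have h3 : 2 * Y i0 i1 <= Y i0 i0 by lra.
have h4 : 2 * Y i0 i2 <= Y i0 i0 by lra.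
have h5 : - (2 * Y i0 i2) <= Y i0 i0 by lra.
have h6 : 2 * Y i1 i2 <= Y i1 i1 by lra.
have h7 : 0 <= Y i0 i0 + Y i1 i1 - 2 * Y i0 i1 + 2 * Y i0 i2 - 2 * Y i1 i2 by lra.
clear F1 F2 F3 F4 F5 F6 F7 gc sym Hmin Hpos Hpd Hsym c c1.
move: h1 h2 h3 h4 h5 h6 h7 Ha Hd Hf.
move: (Y i0 i0) (Y i1 i1) (Y i2 i2) (Y i0 i1) (Y i0 i2) (Y i1 i2) (n i0 0) (n i1 0) (n i2 0).
move=> a b cc d e f x y z h1 h2 h3 h4 h5 h6 h7 Ha Hd Hf.
have -> : x * 1 * x + x * 0 * y + x * 0 * z + (y * 0 * x + y * 1 * y + y * 0 * z) +
    (z * 0 * x + z * 0 * y + z * 1 * z) = x^+2 + y^+2 + z^+2 by ring.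
have -> : x * a * x + x * d * y + x * e * z + (y * d * x + y * b * y + y * f * z) +
    (z * e * x + z * f * y + z * cc * z) =
    a*x^+2 + b*y^+2 + cc*z^+2 + 2*d*x*y + 2*e*x*z + 2*f*y*z by ring.
have K2 := @key2 _ a b cc d e f x y z Ha h1 h2 Hd Hf h3 h4 h5 h6 h7.
set m := Num.min _ _.
have K1 := @key1 _ a b cc d e f x y z m Hd Hf.
have m1 : m <= a - d - `|e| by rewrite /m !ge_min lexx.
have m2 : m <= b - d - f by rewrite /m !ge_min lexx !orbT.
have m3 : m <= cc - f - `|e| by rewrite /m !ge_min lexx !orbT.
have {}K1 := K1 m1 m2 m3.
rewrite /Order.max; by case: ifP.
Qed.
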